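(* Let $A\subset\Pi$ be a finite set with $2\in A\neq\{2\}$, and let $\alpha:A\to\mathbb{N}_0$ be a function with $\alpha(2)=1$ and $\alpha(p)\in\{0,\dots,p-1\}$ for all $p\in A\setminus\{2\}$. Let $x$ be the product of the odd primes in $A$ and let $y$ be any element of $\mathbb{N}\cap\bigcap_{p\in A}(\alpha(p)+p\mathbb{Z})$. Then the set $E=\{y,x,2x\}$ satisfies $A_E=A$ and $\alpha_E=\alpha$.
   Context: $\mathbb{N}=\{1,2,\dots\}$, $\mathbb{N}_0=\{0\}\cup\mathbb{N}$, $\Pi$ the set of primes, $\Pi_z$ the set of prime divisors of $z$. For a nonempty finite $E\subseteq\mathbb{N}$: $\Pi_E=\bigcap_{z\in E}\Pi_z$; $A_E=\{p\in\Pi:\exists k\in\mathbb{N}\ (E\subseteq\{0,k\}+p\mathbb{Z})\}$ where $\{0,k\}+p\mathbb{Z}=p\mathbb{Z}\cup(k+p\mathbb{Z})$; and $\alpha_E:A_E\to\mathbb{N}_0$ is the unique function such that (i) $0\le\alpha_E(p)<p$ for all $p\in A_E$, (ii) $E\subseteq\{0,\alpha_E(p)\}+p\mathbb{Z}$ for all $p\in A_E$, (iii) $\alpha_E(2)=1$ and $\alpha_E(p)=0$ for all $p\in\Pi_E\setminus\{2\}$. *)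

(* Defs.v *)
From mathcomp Require Import all_boot.
Set Implicit Arguments. Unset Strict Implicit. Unset Printing Implicit Defensive.

(* A finite nonempty E ⊆ ℕ is given as a sequence of positive naturals. *)

Definition Pi_E (E : seq nat) (p : nat) : Prop :=
  prime p /\ forall z, z \in E -> p %| z.

Definition in_0k_mod (p k z : nat) : Prop :=
  p %| z \/ z = k %[mod p].

Definition A_E (E : seq nat) (p : nat) : Prop :=
  prime p /\ exists k, 0 < k /\ forall z, z \in E -> in_0k_mod p k z.

(* The defining properties (i)-(iii) of α_E : A_E → ℕ₀ (values outside A_E
   are irrelevant). α_E is the unique function with these properties. *)
Definition is_alpha_E (E : seq nat) (f : nat -> nat) : Prop :=
  (forall p, A_E E p -> f p < p) /\
  (forall p, A_E E p -> forall z, z \in E -> in_0k_mod p (f p) z) /\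
  (A_E E 2 -> f 2 = 1) /\
  (forall p, Pi_E E p -> p <> 2 -> f p = 0).

(* Main.v *)
Require Import Defs.
From mathcomp Require Import all_boot.

Lemma prod_odd_odd (A : seq nat) : odd (\prod_(q <- A | odd q) q).
Proof. by apply: (big_ind (fun n => odd n)) => // a b Ha Hb; rewrite oddM Ha. Qed.

Lemma dvd_prod_in (A : seq nat) p :
  (forall q, q \in A -> prime q) -> prime p ->
  p %| \prod_(q <- A | odd q) q -> p \in A.
Proof.
elim: A => [|q s IH] HA pp; first by rewrite big_nil dvdn1 => /eqP p1; rewrite p1 in pp.
rewrite big_cons in_cons.
have IH' : p %| \prod_(q <- s | odd q) q -> p \in s.
  by apply: IH => // r rs; apply: HA; rewrite in_cons rs orbT.
case: (odd q) => H; last by rewrite IH' ?orbT.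
move: H; rewrite Euclid_dvdM // => /orP [H|H]; last by rewrite IH' ?orbT.
have qp : prime q by apply: HA; rewrite in_cons eqxx.
by move: H; rewrite dvdn_prime2 // => ->.
Qed.

Lemma in_dvd_prod (A : seq nat) p :
  p \in A -> odd p -> p %| \prod_(q <- A | odd q) q.
Proof.
move=> pA op; rewrite (big_rem p pA) /= op; exact: dvdn_mulr.
Qed.

Theorem lemma3p3 (A : seq nat) (alpha : nat -> nat) (y : nat) :
  uniq A ->
  (forall p, p \in A -> prime p) ->
  2 \in A ->
  (exists2 p, p \in A & p != 2) ->
  alpha 2 = 1 ->
  (forall p, p \in A -> p != 2 -> alpha p < p) ->
  0 < y ->
  (forall p, p \in A -> y = alpha p %[mod p]) ->
  let x := \prod_(p <- A | odd p) p in
  let E := [:: y; x; 2 * x] in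
  (forall p, A_E E p <-> p \in A) /\
  is_alpha_E E alpha /\
  (forall f, is_alpha_E E f -> forall p, A_E E p -> f p = alpha p).
Proof.
move=> _ HA A2 _ al2 alp y0 Hy x E.
have xo : odd x by exact: prod_odd_odd.
have Hodd : forall p, prime p -> p != 2 -> odd p.
  by move=> p pp /eqP p2; case/even_prime: pp.
have dx : forall p, p \in A -> p != 2 -> p %| x.
  by move=> p pA p2; apply: in_dvd_prod => //; apply: Hodd => //; apply: HA.
have HAE : forall p, A_E E p <-> p \in A.
  move=> p; split.
  - case=> pp [k [k0 Hk]].
    apply/negPn/negP => pnA.
    have p2 : p != 2 by apply/eqP => e; rewrite e A2 in pnA.
    have ndx : ~~ (p %| x) by apply/negP => /(@dvd_prod_in A p HA pp); rewrite (negbTE pnA).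
    have Hx : x = k %[mod p].
      by case: (Hk x); rewrite ?inE ?eqxx ?orbT // => H; rewrite H in ndx.
    case: (Hk (2 * x)); rewrite ?inE ?eqxx ?orbT //.
    + rewrite Euclid_dvdM // (negbTE ndx) orbF dvdn_prime2 //.
      by rewrite (negbTE p2).
    + rewrite -Hx => /eqP; rewrite eqn_mod_dvd; last by rewrite leq_pmull.
      by rewrite mul2n -addnn addnK (negbTE ndx).
  - move=> pA; split; first exact: HA.
    case: (eqVneq p 2) => [->|p2].
      exists 1; split => // z; rewrite !inE => /or3P [] /eqP ->; rewrite /in_0k_mod.
      + by right; rewrite Hy // al2.
      + by right; rewrite modn2 xo.
      + by left; rewrite dvdn_mulr.
    exists (if alpha p == 0 then p else alpha p); split.
      by case: ifP => [_|/negbT]; [apply: prime_gt0; apply: HA | rewrite lt0n].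
    move=> z; rewrite !inE => /or3P [] /eqP ->; rewrite /in_0k_mod.
    + right; rewrite Hy //; case: ifP => // /eqP ->; by rewrite mod0n modnn.
    + by left; apply: dx.
    + by left; apply: dvdn_mull; apply: dx.
have Hin : forall p, p \in A -> forall z, z \in E -> in_0k_mod p (alpha p) z.
  move=> p pA z; rewrite !inE => /or3P [] /eqP ->; rewrite /in_0k_mod.
  + by right; apply: Hy.
  + case: (eqVneq p 2) => [->|p2]; first by right; rewrite modn2 xo al2.
    by left; apply: dx.
  + by left; case: (eqVneq p 2) => [->|p2]; [rewrite dvdn_mulr | apply: dvdn_mull; apply: dx].
have Hzero : forall p, p \in A -> p != 2 -> p %| y -> alpha p = 0.
  move=> p pA p2 py; have := Hy p pA; move: py; rewrite /dvdn => /eqP ->.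
  by rewrite modn_small ?alp // => <-.
split => //; split.
  split; first by move=> p /HAE pA; case: (eqVneq p 2) => [->|p2]; [rewrite al2 | apply: alp].
  split; first by move=> p /HAE; apply: Hin.
  split => // p [pp Hd] /eqP p2.
  have pA : p \in A by apply: (@dvd_prod_in A p HA pp); apply: Hd; rewrite !inE eqxx orbT.
  by apply: Hzero => //; apply: Hd; rewrite inE eqxx.
move=> f [f1 [f2 [f3 f4]]] p Hp.
have pA : p \in A by apply/HAE.
case: (eqVneq p 2) Hp => [->|p2] Hp; first by rewrite f3 ?al2.
have pp := HA p pA.
case: (f2 p Hp y); rewrite ?inE ?eqxx // => H.
  rewrite (Hzero p pA p2 H); apply: f4 => //; last by apply/eqP.
  split => // z; rewrite !inE => /or3P [] /eqP -> //; first exact: dx.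
  by apply: dvdn_mull; apply: dx.
have := Hy p pA; rewrite H !modn_small //; first exact: alp.
exact: f1.
Qed.
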